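(* Let $c,d>0$ with $\frac1c+\frac1d\ge 1$. For $r\in(0,1)$ and $p>0$ define $$\omega(c,d,p,r)=\left(\frac{r^p}{1+r^p}\,F\!\left(c,d;c+d;\frac{r^p}{1+r^p}\right)\right)^{1/p}.$$ Then for each fixed $r\in(0,1)$, $p\mapsto\omega(c,d,p,r)$ is increasing on $(0,\infty)$. In particular, for all $r\in(0,1)$, $$\frac{\sqrt r}{1+\sqrt r}\,F\!\left(c,d;c+d;\frac{\sqrt r}{1+\sqrt r}\right)\le\left(\frac{r}{1+r}\,F\!\left(c,d;c+d;\frac{r}{1+r}\right)\right)^{1/2}.$$
   Context: $F(a,b;c;x)={}_2F_1(a,b;c;x)=\sum_{n\ge0}\frac{(a)_n(b)_n}{(c)_n}\frac{x^n}{n!}$ for $|x|<1$ is the Gaussian hypergeometric function, where $(a)_0=1$, $(a)_n=a(a+1)\cdots(a+n-1)$. *)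

(* Defs.v *)
From Stdlib Require Import Reals Lra ClassicalEpsilon Factorial.
Open Scope R_scope.

Fixpoint poch (a : R) (n : nat) : R :=
  match n with
  | O => 1
  | S k => poch a k * (a + INR k)
  end.

Definition hyp_term (a b c x : R) (n : nat) : R :=
  poch a n * poch b n / poch c n * x ^ n / INR (fact n).

(* F(a,b;c;x) = sum_{n>=0} hyp_term a b c x n, defined as the sum of the
   series (chosen by Hilbert's epsilon; it is the genuine sum whenever the
   series converges, e.g. for |x| < 1 and c not a non-positive integer). *)
Definition hyp2F1 (a b c x : R) : R :=
  epsilon (inhabits 0) (fun l => infinite_sum (hyp_term a b c x) l).

Definition omega (c d p r : R) : R :=
  let t := Rpower r p / (1 + Rpower r p) in
  Rpower (t * hyp2F1 c d (c + d) t) (1 / p).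

(* Main.v *)
Require Import Defs.
From Stdlib Require Import Reals Lra Lia ClassicalEpsilon Factorial.
Open Scope R_scope.

Definition acoef (c d : R) (n : nat) : R :=
  poch c n * poch d n / poch (c + d) n / INR (fact n).
Definition bcoef (c d : R) (n : nat) : R :=
  match n with O => 1 | S m => acoef c d (S m) - acoef c d m end.
Definition Ssum c d t N := sum_f_R0 (fun n => acoef c d n * t ^ n) N.
Definition Psum c d t N := sum_f_R0 (fun n => bcoef c d n * t ^ n) N.

Lemma poch_pos a n : 0 < a -> 0 < poch a n.
Proof. intros Ha; induction n; simpl; [lra|]. apply Rmult_lt_0_compat; auto.
  pose proof (pos_INR n); lra. Qed.

Lemma acoef_pos c d n : 0 < c -> 0 < d -> 0 < acoef c d n.
Proof. intros; unfold acoef. pose proof (poch_pos c n H). pose proof (poch_pos d n H0).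
  assert (0 < poch (c+d) n) by (apply poch_pos; lra). pose proof (INR_fact_lt_0 n).
  apply Rdiv_lt_0_compat; auto. apply Rdiv_lt_0_compat; auto. apply Rmult_lt_0_compat; auto. Qed.

Lemma acoef_S c d n : 0 < c -> 0 < d ->
  acoef c d (S n) = acoef c d n * ((c + INR n) * (d + INR n) / ((c + d + INR n) * (INR n + 1))).
Proof. intros. unfold acoef. simpl poch. rewrite fact_simpl, mult_INR, S_INR.
  pose proof (poch_pos c n H). pose proof (poch_pos d n H0).
  assert (0 < poch (c+d) n) by (apply poch_pos; lra). pose proof (INR_fact_lt_0 n).
  pose proof (pos_INR n). field. repeat split; lra. Qed.

Lemma bcoef_le c d n : 0 < c -> 0 < d -> c * d <= c + d -> bcoef c d (S n) <= 0.
Proof. intros. simpl bcoef. rewrite acoef_S by auto. pose proof (acoef_pos c d n H H0).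
  pose proof (pos_INR n).
  assert (E : (c + INR n) * (d + INR n) / ((c + d + INR n) * (INR n + 1)) - 1 =
    (c*d - c - d - INR n) * / ((c + d + INR n) * (INR n + 1))) by (field; lra).
  assert (0 < / ((c + d + INR n) * (INR n + 1))).
  { apply Rinv_0_lt_compat. apply Rmult_lt_0_compat; lra. }
  assert ((c*d - c - d - INR n) * / ((c + d + INR n) * (INR n + 1)) <= 0) by nra.
  nra. Qed.

Lemma bcoef2_lt c d : 0 < c -> 0 < d -> c * d <= c + d -> bcoef c d 2 < 0.
Proof. intros. unfold bcoef. rewrite acoef_S by auto. pose proof (acoef_pos c d 1 H H0).
  replace (INR 1) with 1 by (simpl; ring).
  assert (E : (c + 1) * (d + 1) / ((c + d + 1) * (1 + 1)) - 1 =
    (c*d - c - d - 1) * / ((c + d + 1) * (1 + 1))) by (field; lra).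
  assert (0 < / ((c + d + 1) * (1 + 1))).
  { apply Rinv_0_lt_compat. apply Rmult_lt_0_compat; lra. }
  assert ((c*d - c - d - 1) * / ((c + d + 1) * (1 + 1)) < 0) by nra.
  nra. Qed.

Lemma acoef_le1 c d n : 0 < c -> 0 < d -> c * d <= c + d -> acoef c d n <= 1.
Proof. intros. induction n.
  - unfold acoef; simpl; lra.
  - pose proof (bcoef_le c d n H H0 H1). simpl in H2. lra. Qed.

Lemma key_identity c d t N :
  (1 - t) * Ssum c d t N = Psum c d t N - acoef c d N * t ^ (S N).
Proof. unfold Ssum, Psum. induction N.
  - simpl. unfold acoef; simpl. field.
  - rewrite !tech5. cbv beta. rewrite Rmult_plus_distr_l, IHN. simpl pow. unfold bcoef. ring. Qed.

Lemma Psum_le1 c d t N : 0 < c -> 0 < d -> c * d <= c + d -> 0 <= t -> Psum c d t N <= 1.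
Proof. intros. unfold Psum. induction N.
  - simpl; lra.
  - rewrite tech5; cbv beta. pose proof (bcoef_le c d N H H0 H1). pose proof (pow_le t (S N) H2). nra. Qed.

Lemma Psum_le2 c d t N : 0 < c -> 0 < d -> c * d <= c + d -> 0 <= t ->
  Psum c d t (N + 2) <= 1 + bcoef c d 2 * t ^ 2.
Proof. intros. unfold Psum. induction N.
  - simpl. pose proof (bcoef_le c d 0 H H0 H1). simpl bcoef in H3. unfold bcoef. nra.
  - replace (S N + 2)%nat with (S (N + 2)) by lia. rewrite tech5; cbv beta.
    pose proof (bcoef_le c d (N+2) H H0 H1). pose proof (pow_le t (S (N+2)) H2). nra. Qed.

Lemma Psum_mono c d t1 t2 N : 0 < c -> 0 < d -> c * d <= c + d -> 0 <= t1 <= t2 ->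
  Psum c d t2 N <= Psum c d t1 N.
Proof. intros. unfold Psum. induction N.
  - simpl; lra.
  - rewrite !tech5; cbv beta. pose proof (bcoef_le c d N H H0 H1).
    assert (t1 ^ S N <= t2 ^ S N) by (apply pow_incr; lra). nra. Qed.

Lemma tail_cv c d t : 0 < c -> 0 < d -> c * d <= c + d -> 0 <= t < 1 ->
  Un_cv (fun N => acoef c d N * t ^ (S N)) 0.
Proof. intros. intros eps Heps.
  assert (Rabs t < 1) by (rewrite Rabs_right; lra).
  destruct (pow_lt_1_zero t H3 eps Heps) as [N HN]. exists N. intros n Hn.
  unfold R_dist. rewrite Rminus_0_r. specialize (HN (S n) ltac:(lia)).
  pose proof (acoef_pos c d n H H0). pose proof (acoef_le1 c d n H H0 H1).
  pose proof (pow_le t (S n) (proj1 H2)).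
  rewrite Rabs_right in * by nra. nra. Qed.

Lemma cv_ext u v l : Un_cv u l -> (forall n, u n = v n) -> Un_cv v l.
Proof. intros H E eps He. destruct (H eps He) as [N HN]. exists N. intros n Hn.
  rewrite <- E. auto. Qed.

Lemma cv_const k : Un_cv (fun _ => k) k.
Proof. intros eps He. exists O. intros. unfold R_dist. rewrite Rminus_diag, Rabs_R0. auto. Qed.

Lemma F_cv c d t : 0 < c -> 0 < d -> c * d <= c + d -> 0 <= t < 1 ->
  Un_cv (Ssum c d t) (hyp2F1 c d (c + d) t).
Proof. intros.
  assert (G : Un_growing (Ssum c d t)).
  { intro n. unfold Ssum. rewrite tech5; cbv beta. pose proof (acoef_pos c d (S n) H H0).
    pose proof (pow_le t (S n) (proj1 H2)). nra. }
  assert (B : has_ub (Ssum c d t)).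
  { exists (/ (1 - t)). intros x [i ->].
    pose proof (key_identity c d t i). pose proof (Psum_le1 c d t i H H0 H1 (proj1 H2)).
    pose proof (acoef_pos c d i H H0). pose proof (pow_le t (S i) (proj1 H2)).
    assert ((1 - t) * Ssum c d t i <= 1) by nra.
    apply (Rmult_le_reg_l (1 - t)); [lra|]. rewrite Rinv_r by lra. auto. }
  destruct (growing_cv _ G B) as [l Hl].
  assert (HS : infinite_sum (hyp_term c d (c + d) t) l).
  { intros eps He. destruct (Hl eps He) as [N HN]. exists N. intros n Hn.
    replace (sum_f_R0 (hyp_term c d (c + d) t) n) with (Ssum c d t n). auto.
    unfold Ssum. apply sum_eq. intros i _. unfold hyp_term, acoef.
    pose proof (poch_pos (c+d) i ltac:(lra)). pose proof (INR_fact_lt_0 i).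
    field. lra. }
  unfold hyp2F1.
  pose proof (epsilon_spec (inhabits 0) (fun l => infinite_sum (hyp_term c d (c + d) t) l)
     (ex_intro _ l HS)) as HE. simpl in HE.
  rewrite (uniqueness_sum _ _ _ HE HS). auto. Qed.

Lemma H_cv c d t : 0 < c -> 0 < d -> c * d <= c + d -> 0 <= t < 1 ->
  Un_cv (Psum c d t) ((1 - t) * hyp2F1 c d (c + d) t).
Proof. intros.
  pose proof (CV_plus _ _ _ _ (CV_mult _ _ _ _ (cv_const (1 - t)) (F_cv c d t H H0 H1 H2))
     (tail_cv c d t H H0 H1 H2)) as K.
  rewrite Rplus_0_r in K. apply (cv_ext _ _ _ K). intro n. cbv beta.
  rewrite key_identity. ring. Qed.

Lemma F_ge1 c d t : 0 < c -> 0 < d -> c * d <= c + d -> 0 <= t < 1 ->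
  1 <= hyp2F1 c d (c + d) t.
Proof. intros. apply (@Rle_cv_lim (fun _ => 1) (Ssum c d t) 1).
  - intro n. unfold Ssum. induction n.
    + simpl. unfold acoef; simpl; lra.
    + rewrite tech5; cbv beta. pose proof (acoef_pos c d (S n) H H0).
      pose proof (pow_le t (S n) (proj1 H2)). nra.
  - apply cv_const.
  - apply F_cv; auto. Qed.

Lemma H_bounds c d t : 0 < c -> 0 < d -> c * d <= c + d -> 0 < t < 1 ->
  0 < (1 - t) * hyp2F1 c d (c + d) t < 1.
Proof. intros. pose proof (F_ge1 c d t H H0 H1 ltac:(lra)). split; [nra|].
  assert ((1 - t) * hyp2F1 c d (c + d) t <= 1 + bcoef c d 2 * t ^ 2).
  { apply (@Rle_cv_lim (fun n => Psum c d t (n + 2)) (fun _ => 1 + bcoef c d 2 * t ^ 2) ((1 - t) * hyp2F1 c d (c + d) t)).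
    - intro; apply Psum_le2; auto; lra.
    - apply CV_shift'. apply H_cv; auto; lra.
    - apply cv_const. }
  pose proof (bcoef2_lt c d H H0 H1). assert (0 < t ^ 2) by (apply pow_lt; lra). nra. Qed.

Lemma H_mono c d t1 t2 : 0 < c -> 0 < d -> c * d <= c + d -> 0 <= t1 <= t2 -> t2 < 1 ->
  (1 - t2) * hyp2F1 c d (c + d) t2 <= (1 - t1) * hyp2F1 c d (c + d) t1.
Proof. intros. apply (@Rle_cv_lim (Psum c d t2) (Psum c d t1) ((1 - t2) * hyp2F1 c d (c + d) t2)).
  - intro; apply Psum_mono; auto.
  - apply H_cv; auto; lra.
  - apply H_cv; auto; lra. Qed.


Definition tt (r p : R) := Rpower r p / (1 + Rpower r p).

Lemma tt_range r p : 0 < r -> 0 < tt r p < 1.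
Proof. intros. unfold tt. assert (0 < Rpower r p) by (unfold Rpower; apply exp_pos).
  split. apply Rdiv_lt_0_compat; lra.
  apply Rmult_lt_reg_r with (1 + Rpower r p); [lra|].
  unfold Rdiv; rewrite Rmult_assoc, Rinv_l; lra. Qed.

Lemma tt_mono r p q : 0 < r < 1 -> p < q -> tt r q <= tt r p.
Proof. intros. unfold tt, Rpower.
  assert (ln r < 0) by (rewrite <- ln_1; apply ln_increasing; lra).
  assert (exp (q * ln r) < exp (p * ln r)) by (apply exp_increasing; nra).
  set (x := exp (p * ln r)) in *. set (y := exp (q * ln r)) in *.
  assert (0 < y) by (unfold y; apply exp_pos).
  apply Rmult_le_reg_r with ((1 + x) * (1 + y)). nra.
  replace (y / (1 + y) * ((1 + x) * (1 + y))) with (y * (1 + x)) by (field; lra).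
  replace (x / (1 + x) * ((1 + x) * (1 + y))) with (x * (1 + y)) by (field; lra). nra. Qed.

Lemma omega_eq c d p r : 0 < c -> 0 < d -> c * d <= c + d -> 0 < r < 1 -> 0 < p ->
  omega c d p r = exp (ln r + ln ((1 - tt r p) * hyp2F1 c d (c + d) (tt r p)) / p).
Proof. intros. pose proof (tt_range r p (proj1 H2)).
  pose proof (H_bounds c d (tt r p) H H0 H1 H4).
  unfold omega. cbv zeta. fold (tt r p).
  set (HP := (1 - tt r p) * hyp2F1 c d (c + d) (tt r p)) in *.
  assert (E : tt r p = Rpower r p * (1 - tt r p)).
  { unfold tt. assert (0 < Rpower r p) by (unfold Rpower; apply exp_pos). field; lra. }
  assert (E2 : tt r p * hyp2F1 c d (c + d) (tt r p) = Rpower r p * HP).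
  { unfold HP. rewrite E at 1. ring. }
  rewrite E2. unfold Rpower at 1. rewrite ln_mult.
  - unfold Rpower. rewrite ln_exp. f_equal. field. lra.
  - unfold Rpower; apply exp_pos.
  - lra. Qed.

Theorem mainTheorem3 (c d : R) (hc : 0 < c) (hd : 0 < d)
  (hcd : 1 / c + 1 / d >= 1) :
  (forall r : R, 0 < r < 1 ->
     forall p q : R, 0 < p -> p < q -> omega c d p r < omega c d q r)
  /\
  (forall r : R, 0 < r < 1 ->
     sqrt r / (1 + sqrt r) * hyp2F1 c d (c + d) (sqrt r / (1 + sqrt r))
     <= sqrt (r / (1 + r) * hyp2F1 c d (c + d) (r / (1 + r)))).
Proof.
  assert (hcd' : c * d <= c + d).
  { assert (1 / c + 1 / d = (c + d) / (c * d)) by (field; lra).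
    assert (0 < c * d) by nra.
    assert ((c + d) / (c * d) * (c * d) = c + d) by (field; lra). nra. }
  split.
  - intros r Hr p q Hp Hpq.
    rewrite (omega_eq c d p r), (omega_eq c d q r) by (auto; lra).
    apply exp_increasing. apply Rplus_lt_compat_l.
    pose proof (tt_range r p (proj1 Hr)). pose proof (tt_range r q (proj1 Hr)).
    pose proof (tt_mono r p q Hr Hpq).
    pose proof (H_bounds c d (tt r p) hc hd hcd' H).
    pose proof (H_bounds c d (tt r q) hc hd hcd' H0).
    pose proof (H_mono c d (tt r q) (tt r p) hc hd hcd' ltac:(lra) ltac:(lra)).
    set (HP := (1 - tt r p) * hyp2F1 c d (c + d) (tt r p)) in *.
    set (HQ := (1 - tt r q) * hyp2F1 c d (c + d) (tt r q)) in *.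
    assert (ln HP <= ln HQ).
    { destruct (Req_dec HP HQ) as [->|]; [lra|]. left; apply ln_increasing; lra. }
    assert (ln HQ < 0) by (rewrite <- ln_1; apply ln_increasing; lra).
    apply Rle_lt_trans with (ln HQ / p).
    + unfold Rdiv. apply Rmult_le_compat_r; [left; apply Rinv_0_lt_compat; lra|auto].
    + unfold Rdiv. assert (/ q < / p) by (apply Rinv_lt_contravar; nra). nra.
  - intros r Hr. set (s := sqrt r).
    assert (Hs : 0 < s) by (apply sqrt_lt_R0; lra).
    assert (Hss : s * s = r) by (apply sqrt_sqrt; lra).
    assert (Hrs : r < s) by nra.
    set (t1 := s / (1 + s)). set (t2 := r / (1 + r)).
    assert (E1 : t1 = s * (1 - t1)) by (unfold t1; field; lra).
    assert (E2 : t2 = r * (1 - t2)) by (unfold t2; field; lra).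
    assert (Ht1 : 0 < t1 < 1) by (unfold t1; split; [apply Rdiv_lt_0_compat|apply Rmult_lt_reg_r with (1+s); [|unfold Rdiv; rewrite Rmult_assoc, Rinv_l]]; lra).
    assert (Ht2 : 0 < t2 < 1) by (unfold t2; split; [apply Rdiv_lt_0_compat|apply Rmult_lt_reg_r with (1+r); [|unfold Rdiv; rewrite Rmult_assoc, Rinv_l]]; lra).
    assert (Ht12 : t2 <= t1).
    { unfold t1, t2. apply Rmult_le_reg_r with ((1 + r) * (1 + s)). nra.
      replace (r / (1 + r) * ((1 + r) * (1 + s))) with (r * (1 + s)) by (field; lra).
      replace (s / (1 + s) * ((1 + r) * (1 + s))) with (s * (1 + r)) by (field; lra). nra. }
    pose proof (H_bounds c d t1 hc hd hcd' Ht1).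
    pose proof (H_mono c d t2 t1 hc hd hcd' ltac:(lra) ltac:(lra)).
    set (H1 := (1 - t1) * hyp2F1 c d (c + d) t1) in *.
    set (H2 := (1 - t2) * hyp2F1 c d (c + d) t2) in *.
    assert (L : t1 * hyp2F1 c d (c + d) t1 = s * H1) by (unfold H1; rewrite E1 at 1; ring).
    assert (R2 : t2 * hyp2F1 c d (c + d) t2 = r * H2) by (unfold H2; rewrite E2 at 1; ring).
    rewrite L, R2. rewrite <- (sqrt_square (s * H1)) by nra.
    apply sqrt_le_1_alt. replace (s * H1 * (s * H1)) with (r * (H1 * H1)) by (rewrite <- Hss; ring). apply Rmult_le_compat_l; [lra|]. nra.
Qed.
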